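(* For all $\Gamma\subseteq Form$ and $\varphi\in Form$: $\Gamma\vdash_{\mathbf K^p}\varphi$ implies $\Gamma\models_{\mathcal C_{P-}}\varphi$; $\Gamma\vdash_{\mathbf T^p}\varphi$ implies $\Gamma\models_{\mathcal C_{re}}\varphi$; and for each $\clubsuit\in\{\mathbf B^p,\mathbf V,\mathbf{KB4}^p,\mathbf I,\mathbf O,\mathbf C\}$, $\Gamma\vdash_\clubsuit\varphi$ implies $\Gamma\models_{\mathcal C_\clubsuit}\varphi$.
   Context: Fix a countable set $P0$ of propositional variables; $Form$: $\varphi::=p\mid\bot\mid(\varphi\wedge\varphi)\mid(\varphi\to\varphi)$ ($\wedge$ left-associative, binds tighter than $\to$). A model is $\mathfrak M=(W,R,V)$ with $W\neq\emptyset$, $R\subseteq W\times W$, $V:P0\to\wp(W)$; pointed model $(\mathfrak M,s)$, $s\in W$. Satisfaction: $\bot$ never true; $p$ true at $s$ iff $s\in V(p)$; $\wedge$ pointwise; $\mathfrak M,s\models\varphi\to\psi$ iff for all $t$ with $sRt$, $\mathfrak M,t\models\varphi$ implies $\mathfrak M,t\models\psi$. For $X\subseteq W$: $-X=W\setminus X$, $R[X]=\{t:\exists s\in X,\ sRt\}$, $R^\Box(X)=\{s:\forall t\,(sRt\Rightarrow t\in X)\}$. A proposition of $(W,R)$ is $X\subseteq W$ with $R[X]\cap R^\Box(R[X])\subseteq X$; an interpretation is a model with every $V(p)$ a proposition. Classes of models: $\mathcal D_{\mathbf K^p}$ all interpretations; $\mathcal D_{\mathbf T^p}$ reflexive interpretations;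 $\mathcal D_{\mathbf B^p}$ symmetric; $\mathcal D_{\mathbf V}$ transitive; $\mathcal D_{\mathbf{KB4}^p}$ symmetric and transitive; $\mathcal D_{\mathbf I}$ reflexive and transitive; $\mathcal D_{\mathbf O}$ reflexive and symmetric; $\mathcal D_{\mathbf C}$ reflexive, symmetric and transitive interpretations; $\mathcal D_{P-}$ the models with $V(p)\subseteq R^\Box(-R^\Box(\emptyset)\cup V(p))$ for all $p$; $\mathcal D_{re}$ all reflexive models. $\mathcal C_\clubsuit=\{(\mathfrak M,s):\mathfrak M\in\mathcal D_\clubsuit,\ s\in\mathfrak M\}$. $\Gamma\models_{\mathcal C}\varphi$ iff for every $(\mathfrak M,s)\in\mathcal C$, if $\mathfrak M,s$ satisfies all of $\Gamma$ then $\mathfrak M,s\models\varphi$. Sequents are pairs $(\Gamma,\varphi)$, $\Gamma\subseteq Form$ arbitrary; $Sqt$ the set of them. For $\vdash\subseteq Sqt$, $\Gamma\vdash\varphi$ means $(\Gamma,\varphi)\in\vdash$, $\psi\vdash\varphi$ means $\{\psi\}\vdash\varphi$, $\vdash\varphi$ means $\emptyset\vdash\varphi$. Rules (for all $\Gamma,\Delta\subseteq Form$, $p\in P0$, formulas): (A) $\Gamma\cup\{\varphi\}\vdash\varphi$; (Mon) $\Gamma\subseteq\Delta$, $\Gamma\vdash\varphi\Rightarrow\Delta\vdash\varphi$; (Cut) $\Gamma\cup\{\psi\}\vdash\varphi$, $\Delta\vdash\psi\Rightarrow\Gamma\cup\Delta\vdash\varphi$; ($\bot$) $\bot\vdash\varphi$;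 ($\wedge$I) $\{\varphi,\psi\}\vdash\varphi\wedge\psi$; ($\wedge$E) $\varphi\wedge\psi\vdash\varphi$, $\varphi\wedge\psi\vdash\psi$; ($\to$0) $\vdash\varphi\to\varphi$; ($\to$1) $\Gamma\vdash\varphi\Rightarrow\{\psi\to\chi:\chi\in\Gamma\}\vdash\psi\to\varphi$; ($\to$2) $\{\varphi\to\psi,\psi\to\chi\}\vdash\varphi\to\chi$; (Refl) $\{\varphi,\varphi\to\psi\}\vdash\psi$; (Tran) $\varphi\to\psi\vdash(\bot\to\bot)\to(\varphi\to\psi)$; (Sym1) $\Gamma\cup\{\psi\}\vdash\chi$ and $\Gamma\cup\{(\varphi\to\psi)\to\bot\}\vdash\chi\Rightarrow\Gamma\cup\{\varphi\}\vdash\chi$; (Sym2) $\{\alpha\wedge\psi\to\chi,\alpha\wedge((\varphi\to\psi)\to\bot)\to\chi\}\vdash\alpha\wedge\varphi\to\chi$; (Prop$^-$) $p\vdash((\bot\to\bot)\to\bot)\to p$; (Prop$_{tr}$) $p\vdash(\bot\to\bot)\to p$; (Prop$_{sy}$) $p\vdash((p\to\bot)\to\bot)\to p$. Let BASE = (A),(Mon),(Cut),($\bot$),($\wedge$I),($\wedge$E),($\to$0),($\to$1),($\to$2). Each $\vdash_\clubsuit$ is the smallest relation $\subseteq Sqt$ satisfying BASE plus: $\mathbf K^p$: (Prop$^-$); $\mathbf T^p$: (Refl),(Prop$^-$); $\mathbf B^p$: (Sym1),(Sym2),(Prop$_{sy}$); $\mathbf V$: (Tran),(Prop$_{tr}$);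 $\mathbf{KB4}^p$: (Tran),(Sym1),(Sym2),(Prop$_{tr}$); $\mathbf I$: (Refl),(Tran),(Prop$_{tr}$); $\mathbf O$: (Refl),(Sym1),(Sym2),(Prop$_{sy}$); $\mathbf C$: (Refl),(Tran),(Sym1),(Sym2),(Prop$_{tr}$). *)

(* Defs.v *)
Inductive Form : Type :=
| Var : nat -> Form
| Bot : Form
| And : Form -> Form -> Form
| Imp : Form -> Form -> Form.

Definition FSet := Form -> Prop.
Definition sing (a : Form) : FSet := fun x => x = a.
Definition pair (a b : Form) : FSet := fun x => x = a \/ x = b.
Definition addF (G : FSet) (a : Form) : FSet := fun x => G x \/ x = a.
Definition unionF (G D : FSet) : FSet := fun x => G x \/ D x.
Definition subF (G D : FSet) : Prop := forall x, G x -> D x.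
Definition emptyF : FSet := fun _ => False.
Definition impImage (psi : Form) (G : FSet) : FSet :=
  fun x => exists chi, G chi /\ x = Imp psi chi.

Definition Top : Form := Imp Bot Bot.

Record Model : Type := {
  W : Type;
  W_ne : inhabited W;
  Rel : W -> W -> Prop;
  Val : nat -> W -> Prop
}.

Fixpoint sat (M : Model) (s : W M) (f : Form) : Prop :=
  match f with
  | Var p => Val M p s
  | Bot => False
  | And a b => sat M s a /\ sat M s b
  | Imp a b => forall t, Rel M s t -> sat M t a -> sat M t b
  end.

Definition img {T : Type} (R : T -> T -> Prop) (X : T -> Prop) : T -> Prop :=
  fun t => exists s, X s /\ R s t.
Definition boxR {T : Type} (R : T -> T -> Prop) (X : T -> Prop) : T -> Prop :=
  fun s => forall t, R s t -> X t.

Definition isProposition {T : Type} (R : T -> T -> Prop) (X : T -> Prop) : Prop :=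
  forall x, img R X x -> boxR R (img R X) x -> X x.

Definition interpretation (M : Model) : Prop :=
  forall p, isProposition (Rel M) (Val M p).

Definition reflexiveM (M : Model) : Prop := forall s, Rel M s s.
Definition symmetricM (M : Model) : Prop := forall s t, Rel M s t -> Rel M t s.
Definition transitiveM (M : Model) : Prop :=
  forall s t u, Rel M s t -> Rel M t u -> Rel M s u.

Definition D_Kp (M : Model) := interpretation M.
Definition D_Tp (M : Model) := interpretation M /\ reflexiveM M.
Definition D_Bp (M : Model) := interpretation M /\ symmetricM M.
Definition D_V (M : Model) := interpretation M /\ transitiveM M.
Definition D_KB4p (M : Model) := interpretation M /\ symmetricM M /\ transitiveM M.
Definition D_I (M : Model) := interpretation M /\ reflexiveM M /\ transitiveM M.
Definition D_O (M : Model) := interpretation M /\ reflexiveM M /\ symmetricM M.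
Definition D_C (M : Model) :=
  interpretation M /\ reflexiveM M /\ symmetricM M /\ transitiveM M.
Definition D_Pminus (M : Model) : Prop :=
  forall p s, Val M p s ->
    boxR (Rel M) (fun t => ~ boxR (Rel M) (fun _ => False) t \/ Val M p t) s.
Definition D_re (M : Model) : Prop := reflexiveM M.

(* Gamma |=_C phi, where C = {(M,s) : M in D, s in M} *)
Definition conseq (D : Model -> Prop) (G : FSet) (phi : Form) : Prop :=
  forall (M : Model) (s : W M), D M ->
    (forall psi, G psi -> sat M s psi) -> sat M s phi.

Inductive logic : Type := Kp | Tp | Bp | Vl | KB4p | Il | Ol | Cl.

Definition hasRefl (L : logic) : Prop :=
  match L with Tp | Il | Ol | Cl => True | _ => False end.
Definition hasTran (L : logic) : Prop :=
  match L with Vl | KB4p | Il | Cl => True | _ => False end.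
Definition hasSym (L : logic) : Prop :=
  match L with Bp | KB4p | Ol | Cl => True | _ => False end.
Definition hasPropMinus (L : logic) : Prop :=
  match L with Kp | Tp => True | _ => False end.
Definition hasPropTr (L : logic) : Prop :=
  match L with Vl | KB4p | Il | Cl => True | _ => False end.
Definition hasPropSy (L : logic) : Prop :=
  match L with Bp | Ol => True | _ => False end.

Inductive Der (L : logic) : FSet -> Form -> Prop :=
| R_A : forall G phi, Der L (addF G phi) phi
| R_Mon : forall G D phi, subF G D -> Der L G phi -> Der L D phi
| R_Cut : forall G D psi phi,
    Der L (addF G psi) phi -> Der L D psi -> Der L (unionF G D) phi
| R_Bot : forall phi, Der L (sing Bot) phi
| R_AndI : forall phi psi, Der L (pair phi psi) (And phi psi)
| R_AndE1 : forall phi psi, Der L (sing (And phi psi)) phi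
| R_AndE2 : forall phi psi, Der L (sing (And phi psi)) psi
| R_Imp0 : forall phi, Der L emptyF (Imp phi phi)
| R_Imp1 : forall G phi psi, Der L G phi -> Der L (impImage psi G) (Imp psi phi)
| R_Imp2 : forall phi psi chi,
    Der L (pair (Imp phi psi) (Imp psi chi)) (Imp phi chi)
| R_Refl : hasRefl L -> forall phi psi,
    Der L (pair phi (Imp phi psi)) psi
| R_Tran : hasTran L -> forall phi psi,
    Der L (sing (Imp phi psi)) (Imp Top (Imp phi psi))
| R_Sym1 : hasSym L -> forall G phi psi chi,
    Der L (addF G psi) chi -> Der L (addF G (Imp (Imp phi psi) Bot)) chi ->
    Der L (addF G phi) chi
| R_Sym2 : hasSym L -> forall alpha phi psi chi,
    Der L (pair (Imp (And alpha psi) chi)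
                (Imp (And alpha (Imp (Imp phi psi) Bot)) chi))
          (Imp (And alpha phi) chi)
| R_PropMinus : hasPropMinus L -> forall p,
    Der L (sing (Var p)) (Imp (Imp Top Bot) (Var p))
| R_PropTr : hasPropTr L -> forall p,
    Der L (sing (Var p)) (Imp Top (Var p))
| R_PropSy : hasPropSy L -> forall p,
    Der L (sing (Var p)) (Imp (Imp (Imp (Var p) Bot) Bot) (Var p)).

(* Main.v *)
Require Import Defs.
From Stdlib Require Import Classical.

Section S.
Variable L : logic.
Variable D : Model -> Prop.
Hypothesis HR : hasRefl L -> forall M, D M -> reflexiveM M.
Hypothesis HT : hasTran L -> forall M, D M -> transitiveM M.
Hypothesis HS : hasSym L -> forall M, D M -> symmetricM M.
Hypothesis HPm : hasPropMinus L -> forall M, D M -> forall p s, Val M p s ->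
  sat M s (Imp (Imp Top Bot) (Var p)).
Hypothesis HPt : hasPropTr L -> forall M, D M -> forall p s, Val M p s ->
  sat M s (Imp Top (Var p)).
Hypothesis HPs : hasPropSy L -> forall M, D M -> forall p s, Val M p s ->
  sat M s (Imp (Imp (Imp (Var p) Bot) Bot) (Var p)).

Lemma sound : forall G phi, Der L G phi -> conseq D G phi.
Proof.
  induction 1; intros M s HD HG; simpl in *.
  - apply HG; right; reflexivity.
  - apply IHDer; auto.
  - apply IHDer1; auto. intros x [Hx|Hx].
    + apply HG; left; auto.
    + subst. apply IHDer2; auto. intros y Hy; apply HG; right; auto.
  - destruct (HG Bot eq_refl).
  - split; apply HG; unfold pair; auto.
  - exact (proj1 (HG _ eq_refl)).
  - exact (proj2 (HG _ eq_refl)).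
  - auto.
  - intros t Hst Ht. apply IHDer; auto.
    intros chi Hchi. apply (HG (Imp psi chi)); [exists chi; auto | auto | auto].
  - intros t Hst Ht.
    apply (HG (Imp psi chi) (or_intror eq_refl) t Hst).
    apply (HG (Imp phi psi) (or_introl eq_refl) t Hst); auto.
  - apply (HG (Imp phi psi) (or_intror eq_refl) s (HR ltac:(assumption) M HD s)).
    apply HG; left; auto.
  - intros t Hst _ u Htu Hu.
    apply (HG _ eq_refl u (HT ltac:(assumption) M HD _ _ _ Hst Htu)); auto.
  - destruct (classic (sat M s psi)) as [Hp|Hp].
    + apply IHDer1; auto. intros x [Hx|Hx]; [apply HG; left; auto | subst; auto].
    + apply IHDer2; auto. intros x [Hx|Hx]; [apply HG; left; auto | subst].
      simpl. intros t Hst Himp. apply Hp.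
      apply (Himp s (HS ltac:(assumption) M HD _ _ Hst)). apply HG; right; auto.
  - intros t Hst [Ha Hphi].
    destruct (classic (sat M t psi)) as [Hp|Hp].
    + apply (HG _ (or_introl eq_refl) t Hst); simpl; auto.
    + apply (HG _ (or_intror eq_refl) t Hst); simpl; split; auto.
      intros u Htu Himp. apply Hp. apply (Himp t (HS ltac:(assumption) M HD _ _ Htu)); auto.
  - apply HPm; auto. exact (HG _ eq_refl).
  - apply HPt; auto. exact (HG _ eq_refl).
  - apply HPs; auto. exact (HG _ eq_refl).
Qed.
End S.

Lemma pt_lemma : forall M, interpretation M -> transitiveM M -> forall p s, Val M p s ->
  sat M s (Imp Top (Var p)).
Proof.
  intros M HI HT p s Hs t Hst _. simpl. apply HI.
  - exists s; auto.
  - intros u Htu. exists s; split; auto. eapply HT; eauto.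
Qed.

Lemma ps_lemma : forall M, interpretation M -> symmetricM M -> forall p s, Val M p s ->
  sat M s (Imp (Imp (Imp (Var p) Bot) Bot) (Var p)).
Proof.
  intros M HI HS p s Hs t Hst Ht. simpl in *. apply HI.
  - exists s; auto.
  - intros u Htu.
    apply NNPP. intro Hn. apply (Ht u Htu). intros v Huv Hv.
    apply Hn. exists v; split; auto.
Qed.

Lemma pm_re : forall M, reflexiveM M -> forall p s, Val M p s ->
  sat M s (Imp (Imp Top Bot) (Var p)).
Proof.
  intros M HR p s Hs t Hst Ht. simpl in *. exfalso.
  apply (Ht t (HR t)). intros; auto.
Qed.

Lemma pm_pm : forall M, D_Pminus M -> forall p s, Val M p s ->
  sat M s (Imp (Imp Top Bot) (Var p)).
Proof.
  intros M HP p s Hs t Hst Ht. simpl in *.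
  destruct (HP p s Hs t Hst) as [H|H]; auto. exfalso; apply H.
  intros u Htu. apply (Ht u Htu). intros; auto.
Qed.

Theorem mainTheorem5 : forall (G : FSet) (phi : Form),
  (Der Kp G phi -> conseq D_Pminus G phi) /\
  (Der Tp G phi -> conseq D_re G phi) /\
  (Der Bp G phi -> conseq D_Bp G phi) /\
  (Der Vl G phi -> conseq D_V G phi) /\
  (Der KB4p G phi -> conseq D_KB4p G phi) /\
  (Der Il G phi -> conseq D_I G phi) /\
  (Der Ol G phi -> conseq D_O G phi) /\
  (Der Cl G phi -> conseq D_C G phi).
Proof.
  intros G phi.
  unfold D_Bp, D_V, D_KB4p, D_I, D_O, D_C, D_re.
  repeat split; apply sound; simpl; try contradiction; intros _ M HD;
    try solve [ apply pm_pm; auto | apply pm_re; auto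
              | apply pt_lemma; tauto | apply ps_lemma; tauto | tauto ].
Qed.
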